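(* Fix a state $(\mathbf x(n),\mathbf g(n))$ of the model in the context and two feasible withdrawal vectors $\mathbf y(n)$ and $\mathbf y'(n)$. Then $\mathbf y'(n)$ can be obtained from $\mathbf y(n)$ by performing a sequence of feasible single-server reallocations.
   Context: Model: real queues $1,\dots,L$, dummy queue $0$, $K$ identical servers. State: queue lengths $x_i(n)\in\mathbb Z_+$ ($x_0=0$), connectivities $g_{i,j}(n)\in\{0,1\}$ ($g_{0,j}=1$). A scheduling control $\mathbf q\in\{0,\dots,L\}^K$ (server $j$ serves $q_j$, $0$ = idle) is feasible if $g_{q_j,j}=1$ for all $j$ and each real queue $i$ gets at most $x_i$ servers; its withdrawal vector is $y_i=\#\{j:q_j=i\}$; a withdrawal vector is feasible if it arises from a feasible control (an implementation of it). Given a feasible withdrawal vector with implementation $\mathbf q$, a feasible single-server reallocation from queue $t$ to queue $f$ changes $q_k$ from $t$ to $f$ for a single server $k$ with $q_k=t$, such that the new control is again feasible; the new withdrawal vector is the old one plus $\mathbf I(f,t)$, where $\mathbf I(f,t)$ has $+1$ at $f$, $-1$ at $t$ and $0$ elsewhere ($\mathbf I(f,f)=0$). *)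

(* Defs.v *)
From mathcomp Require Import all_boot.
From Stdlib Require Import Relation_Operators.
Set Implicit Arguments. Unset Strict Implicit. Unset Printing Implicit Defensive.

(* Queues are indexed by 'I_L.+1: index 0 (ord0) is the dummy queue, indices
   1..L are the real queues.
   A state consists of queue lengths x : {ffun 'I_L.+1 -> nat} (with x ord0 = 0)
   and connectivities g : 'I_L.+1 -> 'I_K -> bool (with g ord0 j = true). *)

(* A scheduling control: server j serves queue q j (ord0 = idle). *)
Definition control (L K : nat) := {ffun 'I_K -> 'I_L.+1}.

Definition withdrawal (L K : nat) (q : control L K) : {ffun 'I_L.+1 -> nat} :=
  [ffun i => #|[set j | q j == i]|].

Definition feasible_control (L K : nat) (x : {ffun 'I_L.+1 -> nat})
    (g : 'I_L.+1 -> 'I_K -> bool) (q : control L K) : Prop :=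
  (forall j : 'I_K, g (q j) j) /\
  (forall i : 'I_L.+1, i != ord0 -> withdrawal q i <= x i).

Definition implements (L K : nat) (x : {ffun 'I_L.+1 -> nat})
    (g : 'I_L.+1 -> 'I_K -> bool) (q : control L K) (y : {ffun 'I_L.+1 -> nat}) : Prop :=
  feasible_control x g q /\ withdrawal q = y.

Definition feasible_withdrawal (L K : nat) (x : {ffun 'I_L.+1 -> nat})
    (g : 'I_L.+1 -> 'I_K -> bool) (y : {ffun 'I_L.+1 -> nat}) : Prop :=
  exists q : control L K, implements x g q y.

(* the vector I(f,t): +1 at f, -1 at t, 0 elsewhere (I(f,f) = 0); on
   withdrawal vectors we use the nat-valued update y + I(f,t). *)
Definition reallocate_vec (L : nat) (y : {ffun 'I_L.+1 -> nat}) (f t : 'I_L.+1)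
  : {ffun 'I_L.+1 -> nat} :=
  [ffun i => if f == t then y i
             else if i == f then (y i).+1
             else if i == t then (y i).-1 else y i].

Definition reassign (L K : nat) (q : control L K) (k : 'I_K) (f : 'I_L.+1) : control L K :=
  [ffun j => if j == k then f else q j].

Definition single_realloc (L K : nat) (x : {ffun 'I_L.+1 -> nat})
    (g : 'I_L.+1 -> 'I_K -> bool) (y y' : {ffun 'I_L.+1 -> nat}) : Prop :=
  exists (q : control L K) (k : 'I_K) (f t : 'I_L.+1),
    [/\ implements x g q y, q k = t,
        feasible_control x g (reassign q k f) &
        y' = reallocate_vec y f t].

Definition realloc_reachable (L K : nat) (x : {ffun 'I_L.+1 -> nat})
    (g : 'I_L.+1 -> 'I_K -> bool) : {ffun 'I_L.+1 -> nat} -> {ffun 'I_L.+1 -> nat} -> Prop :=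
  clos_refl_trans _ (@single_realloc L K x g).

(* Main.v *)
Require Import Defs.
From mathcomp Require Import all_boot.
From Stdlib Require Import Relation_Operators.

Lemma withdrawal_reassign (L K : nat) (q : control L K) k f :
  withdrawal (reassign q k f) = reallocate_vec (withdrawal q) f (q k).
Proof.
apply/ffunP=> i; rewrite /withdrawal !ffunE.
case: eqP => [->|nfq].
  apply: eq_card => j; rewrite !inE ffunE.
  by case: (j =P k) => // ->.
rewrite (cardsD1 k [set j | reassign q k f j == i]).
rewrite (cardsD1 k [set j | q j == i]).
have E : [set j | reassign q k f j == i] :\ k = [set j | q j == i] :\ k.
  apply/setP=> j; rewrite !inE ffunE; by case: eqP.
rewrite E !inE ffunE eqxx.
case: (i =P f) => [->|nif].
  rewrite eqxx; case: eqP => // h; by exfalso; apply: nfq.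
case: (i =P q k) => [->|niq].
  by rewrite eqxx; case: eqP.
by case: (f =P i) => [h|]; [exfalso; apply: nif|]; case: (q k =P i) => // h; exfalso; apply: niq.
Qed.

Lemma step (L K : nat) x g (q : control L K) k f :
  feasible_control x g q -> feasible_control x g (reassign q k f) ->
  single_realloc x g (withdrawal q) (withdrawal (reassign q k f)).
Proof.
move=> Fq Fr; exists q, k, f, (q k); split => //.
exact: withdrawal_reassign.
Qed.

Definition P (L K : nat) (p : control L K) (n : nat) : control L K :=
  [ffun j : 'I_K => if j < n then p j else ord0].

Arguments P {L K} p n.
Lemma P_feas (L K : nat) x g (p : control L K) n :
  (forall j : 'I_K, g ord0 j = true) ->
  feasible_control x g p -> feasible_control x g (P p n).
Proof.
move=> hg0 [G W]; split.
  by move=> j; rewrite ffunE; case: ifP => _; [exact: G| exact: hg0].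
move=> i ni; apply: leq_trans (W i ni).
rewrite !ffunE; apply: subset_leq_card; apply/subsetP=> j; rewrite !inE ffunE.
case: ifP => // _ /eqP h; by rewrite -h eqxx in ni.
Qed.

Lemma P_reach (L K : nat) x g (p : control L K) n :
  (forall j : 'I_K, g ord0 j = true) ->
  feasible_control x g p ->
  realloc_reachable x g (withdrawal (P p n)) (withdrawal (P p 0)) /\
  realloc_reachable x g (withdrawal (P p 0)) (withdrawal (P p n)).
Proof.
move=> hg0 Fp; elim: n => [|n [IH1 IH2]].
  by split; apply: rt_refl.
case: (ltnP n K) => [nK|Kn].
  pose k := Ordinal nK.
  have E1 : reassign (P p n.+1) k ord0 = P p n.
    apply/ffunP=> j; rewrite !ffunE.
    case: (j =P k) => [->|njk] /=; first by rewrite ltnn.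
    have hjn : (nat_of_ord j == n) = false.
      by apply/eqP => h; apply: njk; apply: val_inj.
    by rewrite (ltnS j n) (leq_eqVlt j n) hjn.
  have E2 : reassign (P p n) k (p k) = P p n.+1.
    apply/ffunP=> j; rewrite !ffunE.
    case: (j =P k) => [->|njk] /=; first by rewrite ltnSn.
    have hjn : (nat_of_ord j == n) = false.
      by apply/eqP => h; apply: njk; apply: val_inj.
    by rewrite (ltnS j n) (leq_eqVlt j n) hjn.
  split.
    apply: rt_trans IH1; apply: rt_step; rewrite -E1.
    apply: step; first exact: P_feas.
    by rewrite E1; apply: P_feas.
  apply: rt_trans IH2 _; apply: rt_step; rewrite -E2.
  apply: step; first exact: P_feas.
  by rewrite E2; apply: P_feas.
have E : P p n.+1 = P p n.
  apply/ffunP=> j; rewrite !ffunE.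
  have h1 : j < n.+1 by apply: leq_trans (ltn_ord j) _; apply: leqW.
  have h2 : j < n by apply: leq_trans (ltn_ord j) _.
  by rewrite h1 h2.
by rewrite E.
Qed.

Lemma P_full (L K : nat) (p : control L K) : P p K = p.
Proof. by apply/ffunP=> j; rewrite ffunE ltn_ord. Qed.

Lemma P_zero (L K : nat) (p p' : control L K) : P p 0 = P p' 0.
Proof. by apply/ffunP=> j; rewrite !ffunE. Qed.

Theorem mainTheorem12 (L K : nat) (x : {ffun 'I_L.+1 -> nat})
    (g : 'I_L.+1 -> 'I_K -> bool)
    (hx0 : x ord0 = 0) (hg0 : forall j : 'I_K, g ord0 j = true)
    (y y' : {ffun 'I_L.+1 -> nat}) :
  feasible_withdrawal (K := K) x g y ->
  feasible_withdrawal (K := K) x g y' ->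
  realloc_reachable (K := K) x g y y'.
Proof.
move=> [q [Fq <-]] [q' [Fq' <-]].
have [A _] := @P_reach L K x g _ K hg0 Fq.
have [_ B] := @P_reach L K x g _ K hg0 Fq'.
rewrite !P_full in A B.
apply: rt_trans A _; by rewrite (@P_zero L K q q').
Qed.
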